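(* Let $R$ be an associative ring with identity and $a,b,c,d\in R$ such that both $a^{\|(b,c)}$ and $d^{\|(b,c)}$ exist. Then the following are equivalent: (i) $aa^{\|(b,c)}=dd^{\|(b,c)}$; (ii) $aa^{\|(b,c)}dd^{\|(b,c)}=dd^{\|(b,c)}aa^{\|(b,c)}$; (iii) $ad^{\|(b,c)}da^{\|(b,c)}=da^{\|(b,c)}ad^{\|(b,c)}$; (iv) $ad^{\|(b,c)}$ is group invertible and $(ad^{\|(b,c)})^{\#}=da^{\|(b,c)}$; (v) $da^{\|(b,c)}$ is group invertible and $(da^{\|(b,c)})^{\#}=ad^{\|(b,c)}$.
   Context: For $a,b,c\in R$, $a$ is $(b,c)$-invertible if there exists $y\in R$ with $y\in (bRy)\cap(yRc)$, $yab=b$ and $cay=c$; such $y$ is unique and denoted $a^{\|(b,c)}$. An element $x\in R$ is group invertible if there is $z\in R$ with $xzx=x$, $zxz=z$, $xz=zx$; such $z$ is unique and denoted $x^{\#}$. *)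

(* Defs.v *)
From HB Require Import structures.
From mathcomp Require Import all_boot all_order all_algebra.
Set Implicit Arguments. Unset Strict Implicit. Unset Printing Implicit Defensive.
Import GRing.Theory.
Local Open Scope ring_scope.

Definition bc_inverse (R : pzRingType) (a b c y : R) : Prop :=
  (exists s : R, y = b * s * y) /\ (exists t : R, y = y * t * c) /\
  y * a * b = b /\ c * a * y = c.

Definition group_inverse (R : pzRingType) (x z : R) : Prop :=
  x * z * x = x /\ z * x * z = z /\ x * z = z * x.

Definition group_invertible (R : pzRingType) (x : R) : Prop :=
  exists z, group_inverse x z.

(* Main.v *)
Require Import Defs.
From HB Require Import structures.
From mathcomp Require Import all_boot all_order all_algebra.
Import GRing.Theory.
Local Open Scope ring_scope.

Lemma L1 (R : pzRingType) (a b c d y y' : R) :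
  bc_inverse a b c y -> bc_inverse d b c y' -> a*y*(d*y') = a*y.
Proof.
move=> [_ [[t Ht] [_ _]]] [_ [_ [_ E]]].
have -> : a*y*(d*y') = a*(y*t*c)*(d*y') by rewrite -Ht.
have -> : a*(y*t*c)*(d*y') = a*y*t*(c*d*y') by rewrite !mulrA.
rewrite E.
have -> : a*y*t*c = a*(y*t*c) by rewrite !mulrA.
by rewrite -Ht.
Qed.

Lemma L2 (R : pzRingType) (a b c d y y' : R) :
  bc_inverse a b c y -> bc_inverse d b c y' -> y' * d * y = y.
Proof.
move=> [[s Hs] [_ [_ _]]] [_ [_ [E _]]].
have -> : y'*d*y = y'*d*(b*s*y) by rewrite -Hs.
by rewrite !mulrA E -Hs.
Qed.

Lemma gi_uniq (R : pzRingType) (x z1 z2 : R) :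
  group_inverse x z1 -> group_inverse x z2 -> z1 = z2.
Proof.
move=> [A1 [B1 C1]] [A2 [B2 C2]].
have e : x * z1 = x * z2.
  rewrite C1.
  transitivity (z1 * (x * z2 * x)); first by rewrite A2.
  transitivity (z1 * (x * (x * z2))); first by rewrite -mulrA C2.
  transitivity (x * z1 * x * z2); first by rewrite !mulrA C1.
  by rewrite A1.
have h2 : z1 = z1 * (x * z1) by rewrite mulrA B1.
by rewrite h2 e mulrA -C1 e C2 B2.
Qed.

Arguments L1 {R a b c d y y'}.
Arguments L2 {R a b c d y y'}.
Arguments gi_uniq {R x z1 z2}.

Theorem theorem4p2 (R : pzRingType) (a b c d ya yd : R)
  (Hya : bc_inverse a b c ya) (Hyd : bc_inverse d b c yd) :
  [/\ (a * ya = d * yd <->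
        a * ya * (d * yd) = d * yd * (a * ya)),
      (a * ya = d * yd <->
        a * yd * (d * ya) = d * ya * (a * yd)),
      (a * ya = d * yd <->
        group_invertible (a * yd) /\
        (forall z, group_inverse (a * yd) z -> z = d * ya))
    & (a * ya = d * yd <->
        group_invertible (d * ya) /\
        (forall z, group_inverse (d * ya) z -> z = a * yd))].
Proof.
have pq := L1 Hya Hyd.
have qp := L1 Hyd Hya.
have xw : a * yd * (d * ya) = a * ya.
  by rewrite -{2}(L2 Hya Hyd) !mulrA.
have wx : d * ya * (a * yd) = d * yd.
  by rewrite -{2}(L2 Hyd Hya) !mulrA.
have xwx : a * yd * (d * ya) * (a * yd) = a * yd.
  by rewrite xw -{2}(L2 Hyd Hya) !mulrA.
have wxw : d * ya * (a * yd) * (d * ya) = d * ya.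
  by rewrite wx -{2}(L2 Hya Hyd) !mulrA.
split.
- split; first by move=> ->.
  by rewrite pq qp.
- by rewrite xw wx.
- split.
  + move=> E.
    have gi : group_inverse (a * yd) (d * ya).
      by split; [exact: xwx | split; [exact: wxw | rewrite xw wx]].
    split; first by exists (d * ya).
    by move=> z Hz; exact: gi_uniq Hz gi.
  + move=> [[z Hz] U]. have := U z Hz => Ez.
    move: Hz => [_ [_ C]]. by rewrite -xw -wx -Ez.
- split.
  + move=> E.
    have gi : group_inverse (d * ya) (a * yd).
      by split; [exact: wxw | split; [exact: xwx | rewrite xw wx]].
    split; first by exists (a * yd).
    by move=> z Hz; exact: gi_uniq Hz gi.
  + move=> [[z Hz] U]. have := U z Hz => Ez.
    move: Hz => [_ [_ C]]. by rewrite -xw -wx -Ez.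
Qed.
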